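(* Let $f$ be a Moufang permutation on an abelian group $(X,+)$ with associated biadditive mapping $\beta$. Then for every integer $i$ and all $x,y\in X$, $$f^{-i}\big(f^i(x)+f^i(y)\big)=x+y+\sum_{k\in I(0,i)}f^{-3k}(\beta(x,y)).$$
   Context: A permutation $f$ of an abelian group $(X,+)$ is a Moufang permutation if the map $\beta(x,y)=f^{-1}(f(x)+f(y))-x-y$ (P1) is symmetric, alternating ($\beta(x,x)=0$) and biadditive, and for all $x,y,z\in X$: (P2) $\beta(\beta(x,y),z)=0$ and (P3) $\beta(f(x),f(y))=f(\beta(f^3(x),y))$; $\beta$ is the associated biadditive mapping. For integers $i,j$, $I(i,j)$ is $\emptyset$ if $i=j$, $\{i,\dots,j-1\}$ if $i<j$, $\{j,\dots,i-1\}$ if $j<i$. *)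

(* Defs.v *)
From mathcomp Require Import all_boot all_order all_algebra.
Set Implicit Arguments. Unset Strict Implicit. Unset Printing Implicit Defensive.
Import Order.TTheory GRing.Theory Num.Theory.
Local Open Scope ring_scope.

Section Moufang.
Variable X : zmodType.

Definition is_perm_pair (f finv : X -> X) : Prop := cancel f finv /\ cancel finv f.

(* Integer powers of the permutation f (with inverse finv):
   f^n for n >= 0, and f^{-(n+1)} = finv^(n+1). *)
Definition fpowz (f finv : X -> X) (i : int) : X -> X :=
  match i with
  | Posz n => iter n f
  | Negz n => iter n.+1 finv
  end.

Definition mbeta (f finv : X -> X) (x y : X) : X := finv (f x + f y) - x - y.

Definition Moufang_perm (f finv : X -> X) : Prop :=
  is_perm_pair f finv /\
  (forall x y, mbeta f finv x y = mbeta f finv y x) /\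
  (forall x, mbeta f finv x x = 0) /\
  (forall x x' y, mbeta f finv (x + x') y = mbeta f finv x y + mbeta f finv x' y) /\
  (forall x y y', mbeta f finv x (y + y') = mbeta f finv x y + mbeta f finv x y') /\
  (forall x y z, mbeta f finv (mbeta f finv x y) z = 0) /\
  (forall x y, mbeta f finv (f x) (f y) = f (mbeta f finv (iter 3 f x) y)).
End Moufang.

(* I(i,j): empty if i = j, {i,...,j-1} if i < j, {j,...,i-1} if j < i. *)
Definition Iint (i j : int) : seq int :=
  [seq (Num.min i j) + (k%:Z) | k <- iota 0 `|i - j|%N].

(* Main.v *)
Require Import Defs.
From mathcomp Require Import all_boot all_order all_algebra.
From mathcomp Require Import zify.
Import Order.TTheory GRing.Theory Num.Theory.
Local Open Scope ring_scope.

Section Aux.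
Variable X : zmodType.
Variables f finv : X -> X.
Hypothesis fK : cancel f finv.
Hypothesis finvK : cancel finv f.
Local Notation b := (mbeta f finv).
Hypothesis bsym : forall x y, b x y = b y x.
Hypothesis balt : forall x, b x x = 0.
Hypothesis badd1 : forall x x' y, b (x + x') y = b x y + b x' y.
Hypothesis badd2 : forall x y y', b x (y + y') = b x y + b x y'.
Hypothesis bP2 : forall x y z, b (b x y) z = 0.
Hypothesis bP3 : forall x y, b (f x) (f y) = f (b (iter 3 f x) y).

Lemma bE x y : finv (f x + f y) = x + y + b x y.
Proof. by rewrite /mbeta -[finv _ - x - y]addrA -opprD [RHS]addrC subrK. Qed.

Lemma btwo x y : b x y + b x y = 0.
Proof.
have := balt (x + y).
by rewrite badd1 !badd2 !balt add0r addr0 (bsym y x).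
Qed.

Lemma bopp x y : - b x y = b x y.
Proof. by apply/eqP; rewrite eq_sym -subr_eq0 opprK btwo. Qed.

Definition imb (c : X) := exists a a', c = b a a'.

Lemma im_null c z : imb c -> b c z = 0.
Proof. by case=> a [a' ->]; apply: bP2. Qed.

Lemma fadd c z : imb c -> f (c + z) = f c + f z.
Proof. move=> hc; have := bE c z; rewrite im_null // addr0 => h. by rewrite -h finvK. Qed.

Lemma fb1 a a' : f (b a a') = b (finv (finv a)) (f a').
Proof. have := bP3 (finv (finv (finv a))) a'. by rewrite /= !finvK => <-. Qed.

Lemma fb2 a a' : f (b a a') = b (f a) (finv (finv a')).
Proof. by rewrite bsym fb1 bsym. Qed.

Lemma f_im c : imb c -> imb (f c).
Proof. case=> a [a' ->]; rewrite fb1; by do 2 eexists. Qed.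

Lemma finvb a a' : finv (b a a') = b (f (f a)) (finv a').
Proof.
have := bP3 (finv a) (finv a'). rewrite !finvK /= finvK => ->. by rewrite fK.
Qed.

Lemma finv_im c : imb c -> imb (finv c).
Proof. case=> a [a' ->]; rewrite finvb; by do 2 eexists. Qed.

Lemma finvadd c z : imb c -> finv (c + z) = finv c + finv z.
Proof.
move=> hc. by rewrite -{1}(finvK c) -{1}(finvK z) -fadd ?fK //; apply: finv_im.
Qed.

Lemma iterF_im n c : imb c -> imb (iter n f c).
Proof. move=> hc; elim: n => //= n IH; exact: f_im. Qed.

Lemma iterG_im n c : imb c -> imb (iter n finv c).
Proof. move=> hc; elim: n => //= n IH; exact: finv_im. Qed.

Lemma iterF_add n c z : imb c -> iter n f (c + z) = iter n f c + iter n f z.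
Proof. move=> hc; elim: n => //= n ->; apply: fadd; exact: iterF_im. Qed.

Lemma iterG_add n c z : imb c -> iter n finv (c + z) = iter n finv c + iter n finv z.
Proof. move=> hc; elim: n => //= n ->; apply: finvadd; exact: iterG_im. Qed.

Lemma key a a' : b (finv a) (finv a') = f (f (b a a')).
Proof. by rewrite fb1 fb2 !finvK fK. Qed.

Lemma bff a a' : b (f a) (f a') = finv (finv (b a a')).
Proof. have := key (f a) (f a'); rewrite !fK => ->. by rewrite !fK. Qed.

Lemma bF n x y : b (iter n f x) (iter n f y) = iter (n + n) finv (b x y).
Proof. elim: n => //= n IH; by rewrite bff IH addnS. Qed.

Lemma bG n x y : b (iter n finv x) (iter n finv y) = iter (n + n) f (b x y).
Proof. elim: n => //= n IH; by rewrite key IH addnS. Qed.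

Lemma imbb x y : imb (b x y). Proof. by do 2 eexists. Qed.

Lemma Pn n x y : iter n finv (iter n f x + iter n f y)
  = x + y + \sum_(0 <= k < n) iter (3 * k) finv (b x y).
Proof.
elim: n => [|n IH]; first by rewrite big_geq // addr0.
rewrite big_nat_recr // [iter n.+1 finv _]iterSr /= bE (addrC (_ + _) (b _ _)).
rewrite iterG_add; last exact: imbb.
rewrite IH bF -iterD.
have -> : (n + (n + n) = 3 * n)%N by rewrite !mulSn mul0n addn0.
by rewrite [LHS]addrC -!addrA.
Qed.

Lemma Qn n x y : iter n f (iter n finv x + iter n finv y)
  = x + y + \sum_(0 <= k < n) iter (3 * k.+1) f (b x y).
Proof.
elim: n => [|n IH]; first by rewrite big_geq // addr0.
rewrite big_nat_recr // [iter n.+1 f _]iterSr.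
change (iter n.+1 finv x) with (finv (iter n finv x)).
change (iter n.+1 finv y) with (finv (iter n finv y)).
set u := iter n finv x; set v := iter n finv y.
have h : finv u + finv v = b (finv u) (finv v) + finv (u + v).
  have := bE (finv u) (finv v); rewrite !finvK => ->.
  by rewrite [RHS]addrC -addrA btwo addr0.
rewrite h fadd; last exact: imbb.
rewrite finvK iterF_add; last exact: f_im (imbb _ _).
rewrite IH [LHS]addrC -!addrA; do 3 f_equal.
rewrite -iterSr /u /v -!iterS bG -iterD.
have -> : (n.+1 + (n.+1 + n.+1) = 3 * n.+1)%N by rewrite !mulSn mul0n addn0.
reflexivity.
Qed.

End Aux.

Theorem mainTheorem12 (X : zmodType) (f finv : X -> X) :
  Moufang_perm f finv ->
  forall (i : int) (x y : X),
    fpowz f finv (- i) (fpowz f finv i x + fpowz f finv i y)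
    = x + y + \sum_(k <- Iint 0 i) fpowz f finv (- (3 * k)) (mbeta f finv x y).
Proof.
case=> [[fK finvK] [bsym [balt [badd1 [badd2 [bP2 bP3]]]]]].
have fneg : forall n z, fpowz f finv (- (Posz n)) z = iter n finv z by case.
case=> [n|m] x y.
- rewrite fneg /= Pn //; congr (_ + _).
  rewrite /Iint big_map /index_iota subn0.
  have -> : Num.min (0:int) n%:Z = 0 by rewrite min_l.
  have -> : `|0 - n%:Z|%N = n by rewrite sub0r abszN absz_nat.
  apply: eq_bigr => k _; rewrite add0r -PoszM fneg //.
- have -> : - Negz m = Posz m.+1 by [].
  change (iter m.+1 f (iter m.+1 finv x + iter m.+1 finv y) = x + y + \sum_(k <- Iint 0 (Negz m)) fpowz f finv (- (3 * k)) (mbeta f finv x y)).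
  rewrite Qn //; congr (_ + _).
  rewrite /Iint big_map /index_iota subn0.
  have -> : Num.min (0:int) (Negz m) = Negz m by rewrite min_r.
  have -> : `|0 - Negz m|%N = m.+1 by [].
  rewrite -(subn0 m.+1) -/(index_iota 0 m.+1) big_nat_rev.
  apply: eq_big_nat => k /andP[_ hk].
  have e : - (3 * (Negz m + k%:Z)) = Posz (3 * (0 + m.+1 - k.+1).+1) by lia.
  by rewrite e.
Qed.
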